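(* Let $H$ be a reduced valuation monoid with quotient group $G=\mathsf{q}(H)$, and let $X$ be a finite subset of $G$ containing the identity $1$. Then there exists a unique $a\in G$ such that $aX=\{ax: x\in X\}$ is a finite subset of $H$ containing $1$.
   Context: All monoids are written multiplicatively. A commutative monoid $H$ is cancellative if $ac=bc$ implies $a=b$ for all $a,b,c\in H$. For a commutative cancellative monoid $H$, $\mathsf{q}(H)$ denotes its quotient (Grothendieck) group, with $H\subseteq \mathsf{q}(H)$ and $\mathsf{q}(H)=\{ab^{-1}: a,b\in H\}$. A commutative cancellative monoid $H$ is a valuation monoid if for every $x\in\mathsf{q}(H)$ we have $x\in H$ or $x^{-1}\in H$; it is reduced if its only invertible element is the identity $1$. *)

(* Defs.v *)
From HB Require Import structures.
From mathcomp Require Export all_boot.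
From mathcomp Require Export finmap.
Set Implicit Arguments.
Unset Strict Implicit.
Unset Printing Implicit Defensive.

(* A commutative multiplicative group is encoded as a MathComp [groupType]
   together with an explicit commutativity hypothesis. *)
Open Scope group_scope.

Definition submonoid (G : groupType) (H : G -> Prop) : Prop :=
  H 1 /\ forall x y : G, H x -> H y -> H (x * y).

Definition is_quotient_group (G : groupType) (H : G -> Prop) : Prop :=
  forall g : G, exists a b : G, [/\ H a, H b & g = a * b^-1].

Definition valuation (G : groupType) (H : G -> Prop) : Prop :=
  forall x : G, H x \/ H x^-1.

Definition reduced (G : groupType) (H : G -> Prop) : Prop :=
  forall x : G, H x -> H x^-1 -> x = 1.

(* Main.v *)
Require Import Defs.
From mathcomp Require Import all_boot finmap.
Open Scope fset_scope.
Open Scope group_scope.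

Lemma min_exists (G : groupType) (H : G -> Prop) (Hmon : submonoid H)
  (Hval : valuation H) (s : seq G) :
  exists m, m \in (1 : G) :: s /\ forall y, y \in (1 : G) :: s -> H (m^-1 * y).
Proof.
case: Hmon => H1 HM.
elim: s => [|x s [m [ms Hm]]].
  exists 1; split; first by rewrite inE.
  by move=> y; rewrite inE => /eqP ->; rewrite invg1 mulg1.
have trans : forall a b c : G, H (a^-1 * b) -> H (b^-1 * c) -> H (a^-1 * c).
  move=> a b c h1 h2; have := HM _ _ h1 h2.
  by rewrite -mulgA (mulgA b) mulgV mul1g.
case: (Hval (x^-1 * m)) => hxm.
- exists x; split; first by rewrite !inE eqxx orbT.
  move=> y; rewrite !inE => /or3P [/eqP->|/eqP->|ys].
  + by apply: (trans _ m); [|apply: Hm; rewrite inE eqxx].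
  + by rewrite mulVg.
  + by apply: (trans _ m); [|apply: Hm; rewrite inE ys orbT].
- have hmx : H (m^-1 * x) by move: hxm; rewrite invgM invgK.
  exists m; split.
    by move: ms; rewrite !inE => /orP [->|->]; rewrite ?orbT.
  move=> y; rewrite !inE => /or3P [/eqP->|/eqP->|ys] //.
  + by apply: Hm; rewrite inE eqxx.
  + by apply: Hm; rewrite inE ys orbT.
Qed.

Theorem lemma1 (G : groupType) (mulC : forall x y : G, x * y = y * x)
  (H : G -> Prop) (Hmon : submonoid H) (Hq : is_quotient_group H)
  (Hval : valuation H) (Hred : reduced H)
  (X : {fset G}) (X1 : (1 : G) \in X) :
  exists! a : G,
    (forall y : G, y \in [fset a * x | x in X] -> H y) /\
    (1 : G) \in [fset a * x | x in X].
Proof.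
have memX : forall y, (y \in (1 : G) :: enum_fset X) = (y \in X).
  move=> y; rewrite inE; case: eqP => [->|] //=.
have [m [ms Hm]] := @min_exists _ H Hmon Hval (enum_fset X).
rewrite memX in ms.
exists m^-1; split.
  split.
    move=> y /imfsetP [x /= xX ->]; apply: Hm; by rewrite memX.
  by apply/imfsetP; exists m => //; rewrite mulVg.
move=> b [Hb /imfsetP [x0 /= x0X e]].
have eb : b = x0^-1.
  apply: (mulIg x0); rewrite -e mulVg; done.
subst b.
have h1 : H (x0^-1 * m) by apply: Hb; apply/imfsetP; exists m.
have h2 : H (m^-1 * x0) by apply: Hm; rewrite memX.
have E := Hred _ h1; rewrite invgM invgK in E; have {}E := E h2.
by apply: (mulIg m); rewrite E mulVg.
Qed.
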